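(* For $n\ge 2$ let $D_n(t)=\sum_{\pi\in\mathfrak{D}_n}t^{\mathrm{des}(\pi)}=\sum_{k\ge1}d_{n,k}t^k$. Then for $n\geq 3$, $$D_n(t)=(-1)^nt^{n-1}+(1+(n-1)t)D_{n-1}(t)+t(1-t)D'_{n-1}(t).$$ Equivalently, $d_{n,n-1}=1$ if $n$ is even, $d_{n,n-1}=0$ if $n$ is odd, and $d_{n,k}=(k+1)d_{n-1,k}+(n-k)d_{n-1,k-1}$ if $k\neq n-1$.
   Context: $\mathfrak{D}_n$ is the set of derangements (fixed-point-free permutations) of $[n]$, and $\mathrm{des}(\pi)=\#\{i\in[n-1]:\pi_i>\pi_{i+1}\}$. $D'_{n-1}$ denotes the derivative in $t$. *)

(* Defs.v *)
From mathcomp Require Import all_boot all_order all_fingroup all_algebra.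
Set Implicit Arguments. Unset Strict Implicit. Unset Printing Implicit Defensive.
Import GRing.Theory.
Local Open Scope ring_scope.

(* Permutations of [n] are modelled as permutations of 'I_n = {0,...,n-1};
   the one-line notation is pi_{i+1} = s i. *)

Definition derangement (n : nat) (s : 'S_n) : bool := [forall i, s i != i].

Definition des (n : nat) (s : 'S_n) : nat :=
  #|[set ij : 'I_n * 'I_n | (ij.2 == ij.1.+1 :> nat) && (s ij.2 < s ij.1)%N]|.

Definition Dpoly (n : nat) : {poly int} :=
  \sum_(s : 'S_n | derangement s) 'X^(des s).

(* Main.v *)
Require Import Defs.
From mathcomp Require Import all_boot all_order all_fingroup all_algebra.
From mathcomp Require Import ring zify.
Import GRing.Theory Num.Theory.
Local Open Scope ring_scope.
Local Open Scope ring_scope.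

Definition T (n : nat) (p : {poly int}) : {poly int} :=
  (1 + (n.-1)%:R *: 'X) * p + 'X * (1 - 'X) * p^`().

Lemma T_add n p q : T n (p + q) = T n p + T n q.
Proof. rewrite /T derivD; ring. Qed.
Lemma T0 n : T n 0 = 0.
Proof. by rewrite /T deriv0 !mulr0 addr0. Qed.
Lemma T_scale n (a : int) p : T n (a *: p) = a *: T n p.
Proof. rewrite /T derivZ -!mul_polyC; ring. Qed.
Lemma T_sum n (I : finType) (P : pred I) (F : I -> {poly int}) :
  T n (\sum_(i | P i) F i) = \sum_(i | P i) T n (F i).
Proof. exact: (big_morph (T n) (T_add n) (T0 n)). Qed.

Lemma TX n k : T n 'X^k = (k.+1)%:R *: 'X^k + ((n.-1)%:R - k%:R : int) *: 'X^(k.+1) :> {poly int}.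
Proof.
rewrite /T derivXn.
have -> : 'X * (1 - 'X) * ('X^(k.-1) *+ k) = (1 - 'X) * (('X^k) *+ k) :> {poly int}.
  case: k => [|k]; first by rewrite !mulr0n !mulr0.
  by rewrite /= exprS; ring.
rewrite -!mul_polyC polyCB !polyC_natr exprS; ring.
Qed.

Definition Op (n g : nat) (p : {poly int}) : {poly int} := T n p + g%:R *: ((1 - 'X) * p).

Lemma Op_add n g p q : Op n g (p + q) = Op n g p + Op n g q.
Proof. rewrite /Op T_add mulrDr scalerDr; ring. Qed.
Lemma Op_scale n g (a : int) p : Op n g (a *: p) = a *: Op n g p.
Proof. rewrite /Op T_scale -!mul_polyC; ring. Qed.
Lemma Op0 n g : Op n g 0 = 0.
Proof. by rewrite /Op T0 mulr0 scaler0 addr0. Qed.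
Lemma Op_sub n g p q : Op n g (p - q) = Op n g p - Op n g q.
Proof. by rewrite Op_add -scaleN1r Op_scale scaleN1r. Qed.

Lemma OpX n g k : Op n g 'X^k = (k.+1 + g)%:R *: 'X^k + ((n.-1)%:R - k%:R - g%:R : int) *: 'X^(k.+1) :> {poly int}.
Proof.
rewrite /Op TX -!mul_polyC !polyCB !polyC_natr natrD exprS; ring.
Qed.

Definition b (n f : nat) : {poly int} :=
  if f is g.+1 then ((-1) ^+ (n.-1 - g) * 'C(n.-1, g)%:R : int) *: 'X^(n.-1 - g) else 0.
Definition c (n f : nat) : {poly int} := b n f - b n f.+1.

Lemma B1 m g : g%:R *: b m.+2 g.+1 = (m.+1)%:R *: b m.+1 g :> {poly int}.
Proof.
case: g => [|h]; first by rewrite /b scale0r scaler0.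
rewrite /b /= subSS !scalerA; congr (_ *: _).
rewrite mulrCA [in RHS]mulrCA; congr (_ * _).
by rewrite -!natrM mul_bin_diag.
Qed.

Lemma B2 m g : Op m.+2 g (b m.+1 g) = (m.+2)%:R *: b m.+1 g.
Proof.
case: g => [|h]; first by rewrite /b Op0 scaler0.
rewrite /b /= Op_scale. idtac.
case: (leqP h m) => hm; last by rewrite bin_small // mulr0 !scale0r scaler0.
rewrite OpX.
have -> : ((m.+2).-1%:R - (m - h)%:R - (h.+1)%:R : int) = 0.
  by rewrite natrB // -addn1 -[h.+1]addn1 !natrD /=; ring.
rewrite scale0r addr0 !scalerA [in RHS]mulrC; congr (_ *: _); congr (_ * _).
by congr (_%:R); lia.
Qed.

Ltac polysimp :=
  rewrite -?mul_polyC ?(polyCM, polyCB, polyCN, polyCD, polyC_natr, rmorphXn, rmorphN1, natrD, exprS) /=.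

Lemma B3 m g :
  Op m.+2 g (b m.+1 g.+1) = (m.+1)%:R *: b m.+1 g.+1 - (b m.+2 g.+1 - b m.+1 g).
Proof.
case: (leqP g m) => hm; last first.
  rewrite /b /= bin_small // mulr0 scale0r Op0 scaler0 sub0r.
  case: g hm => [|h] //= hm.
  case: (ltngtP h m) => [hm2|hm2|e]; first lia.
    by rewrite !bin_small // ?mulr0 ?scale0r ?subrr ?oppr0.
  by rewrite e !subnn !binn subrr oppr0.
rewrite /b /= Op_scale.
have [k ->] : exists k, m = (g + k)%N by exists (m - g)%N; lia.
have -> : (g + k - g = k)%N by lia.
have -> : ((g + k).+1 - g = k.+1)%N by lia.
rewrite OpX.
have -> : ((g + k).+2.-1%:R - k%:R - g%:R : int) = 1.
  by rewrite /= -[(g + k).+1]addn1 !natrD; ring.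
clear hm; case: g => [|h].
  rewrite !add0n !bin0 addn0 subr0; polysimp; ring.
have -> : (h.+1 + k - h = k.+1)%N by lia.
rewrite -[(h.+1 + k).+1]addSn binS.
polysimp. ring.
Qed.

Lemma A3 m g : Op m.+2 g (c m.+1 g) = (g.+1)%:R *: c m.+2 g.+1.
Proof.
rewrite /c Op_sub B2 B3 scalerBr.
have e1 := B1 m g; have e2 := B1 m g.+1.
have e3 : (g.+1)%:R *: b m.+2 g.+1 = g%:R *: b m.+2 g.+1 + b m.+2 g.+1.
  by rewrite mulrSr scalerDl scale1r.
rewrite e2 e3 e1.
polysimp. ring.
Qed.

Lemma A1 m : \sum_(f < m.+2) c m.+1 f = 0.
Proof.
rewrite (eq_bigr (fun f : 'I_m.+2 => - (b m.+1 (f : nat).+1 - b m.+1 f))); last first.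
  by move=> i _; rewrite /c opprB.
rewrite sumrN -(big_mkord xpredT (fun f => b m.+1 f.+1 - b m.+1 f)).
rewrite telescope_sumr //.
by rewrite /b /= bin_small // mulr0 scale0r subr0 oppr0.
Qed.

Lemma A2 m : c m.+1 0 = (-1) ^+ m.+1 *: 'X^m.
Proof. rewrite /c /b /= subn0 bin0 mulr1 sub0r exprS mulN1r scaleNr //. Qed.

Lemma comm_T m Q : T m.+2 ((1 - 'X) * Q) = (1 - 'X) * T m.+1 Q.
Proof.
have d1 : (1 : {poly int})^`() = 0 by rewrite -polyC1 derivC.
rewrite /T derivM derivB derivX d1 /=.
rewrite -!mul_polyC !polyC_natr -[(m.+1)%:R]/((1 *+ m.+1 : {poly int})) mulrSr.
ring.
Qed.

Lemma scaler_injS (k : nat) (p q : {poly int}) :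
  (k.+1)%:R *: p = (k.+1)%:R *: q -> p = q.
Proof.
move=> e; apply/polyP => i; have := congr1 (fun r : {poly int} => r`_i) e.
by rewrite /= !coefZ; apply: mulfI; rewrite pnatr_eq0.
Qed.


Local Open Scope nat_scope.

Definition sf (n : nat) (s : 'S_n) (i : nat) : nat :=
  if (insub i : option 'I_n) is Some x then val (s x) else 0%N.
Arguments sf {n}.

Lemma sfE n (s : 'S_n) (x : 'I_n) : sf s x = s x.
Proof. by rewrite /sf valK. Qed.
Arguments sfE {n}.

Definition desn (g : nat -> nat) (n : nat) : nat :=
  (\sum_(0 <= i < n.-1) (g i.+1 < g i))%N.

Lemma desE n (s : 'S_n) : des s = desn (sf s) n.
Proof.
rewrite /des -sum1dep_card.
have -> : (\sum_(x : 'I_n * 'I_n | ((x.2 : nat) == (x.1 : nat).+1) && (s x.2 < s x.1)) 1)%N =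
  (\sum_(i : 'I_n) \sum_(j : 'I_n | (j == (i : nat).+1 :> nat) && (s j < s i)) 1)%N.
  by rewrite pair_big_dep; apply: eq_bigl.
rewrite (eq_bigr (fun i : 'I_n => ((i.+1 < n) && (sf s i.+1 < sf s i) : nat))); last first.
  move=> i _; case: (ltnP i.+1 n) => h.
    rewrite big_mkcondr (bigD1 (Ordinal h)) /=; last by rewrite eqxx.
    rewrite big1; last first.
      move=> j /andP [/eqP e ne]; case/eqP: ne; exact: val_inj.
    by rewrite addn0 (sfE s (Ordinal h)) sfE; case: (_ < _).
  rewrite big_pred0 // => j; apply/negbTE/negP => /andP [/eqP e _].
  by have := ltn_ord j; rewrite e ltnNge h.
rewrite -(big_mkord xpredT (fun i => ((i.+1 < n) && (sf s i.+1 < sf s i) : nat))).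
case: n s => [|k] s; first by rewrite /desn !big_geq.
rewrite big_nat_recr //= ltnn addn0 /desn /=.
by apply: eq_big_nat => i /andP [_ hi]; rewrite ltnS hi.
Qed.

Lemma desn_ins (g g' h : nat -> nat) (m p v : nat) :
  p <= m -> (forall x y, (h x < h y) = (x < y)) ->
  (forall i, i < p -> g' i = h (g i)) -> g' p = v ->
  (forall i, p < i <= m -> g' i = h (g i.-1)) ->
  desn g' m.+1 + ((0 < p < m) && (g p < g p.-1)) =
  desn g m + ((0 < p) && (v < h (g p.-1))) + ((p < m) && (h (g p) < v)).
Proof.
move=> hpm hh h1 h2 h3; rewrite /desn /=.
have hmid : \sum_(p.+1 <= i < m) (g' i.+1 < g' i) = \sum_(p <= i < m.-1) (g i.+1 < g i).
  rewrite big_add1; apply: eq_big_nat => i /andP [hi1 hi2].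
  rewrite (h3 i.+2); last by lia.
  by rewrite (h3 i.+1) ?hh //; lia.
have hpre : \sum_(0 <= i < p.-1) (g' i.+1 < g' i) = \sum_(0 <= i < p.-1) (g i.+1 < g i).
  apply: eq_big_nat => i /andP [_ hi].
  by rewrite !h1 ?hh //; lia.
rewrite (@big_cat_nat _ _ _ p) //= (@big_cat_nat _ _ _ p.-1 0 m.-1) //=; last by lia.
case: p hpm h1 h2 h3 hmid hpre => [|q] hpm h1 h2 h3 hmid hpre.
  rewrite big_geq // add0n addn0 /=.
  case: (posnP m) => [m0|mpos].
    by subst m; rewrite !big_geq.
  rewrite big_ltn // hmid /= h2 (h3 1) //= [\sum_(0 <= i < 0) _]big_geq //; last by lia.
rewrite /= in hpre; rewrite big_nat_recr //= hpre h2 (h1 q) //=.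
case: (ltngtP q.+1 m) => hqm; last 2 first.
- by move: hpm; rewrite leqNgt hqm.
- rewrite -hqm /= [\sum_(q.+1 <= i < q.+1) _]big_geq // [\sum_(q <= i < q) _]big_geq //; lia.
rewrite [\sum_(q.+1 <= i < m) _]big_ltn // hmid (h3 q.+2) /=; last by lia.
rewrite [\sum_(q <= i < m.-1) _]big_ltn; last by lia.
lia.
Qed.

Lemma bump_lt p x y : (bump p x < bump p y) = (x < y).
Proof. rewrite /bump; case: leqP; case: leqP => /= *; lia. Qed.

Lemma sf_lift m (i j : 'I_m.+1) (s : 'S_m) k : k < m ->
  sf (lift_perm i j s) (bump i k) = bump j (sf s k).
Proof.
move=> hk.
rewrite -[bump i k]/(val (lift i (Ordinal hk))) sfE lift_perm_lift /=.
by rewrite -(sfE s (Ordinal hk)).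
Qed.
Arguments sf_lift {m}.

Lemma sf_liftp m (i j : 'I_m.+1) (s : 'S_m) : sf (lift_perm i j s) i = j.
Proof. by rewrite sfE lift_perm_id. Qed.

Lemma sf_lt m (s : 'S_m) k : k < m -> sf s k < m.
Proof. by move=> hk; rewrite -[k]/(val (Ordinal hk)) sfE. Qed.

Lemma des_lift m (i j : 'I_m.+1) (s : 'S_m) :
  des (lift_perm i j s) + ((0 < i < m) && (sf s i < sf s i.-1)) =
  des s + ((0 < i) && (j < bump j (sf s i.-1))) + ((i < m) && (bump j (sf s i) < j)).
Proof.
rewrite !desE; apply: desn_ins.
- by rewrite -ltnS.
- exact: bump_lt.
- move=> k hk; have hkm : k < m by have := ltn_ord i; lia.
  by rewrite -(sf_lift i j s k hkm) /bump leqNgt hk.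
- exact: sf_liftp.
- move=> k /andP [hk1 hk2]; have hkm : k.-1 < m by lia.
  rewrite -(sf_lift i j s _ hkm); congr (sf _ _); rewrite /bump; case: leqP => /=; lia.
Qed.

Lemma sum_e m (s : 'S_m) :
  \sum_(p < m.+1) ((0 < p) && (p <= sf s p.-1)) = \sum_(0 <= i < m) (i < sf s i).
Proof.
rewrite -(big_mkord xpredT (fun p => ((0 < p) && (p <= sf s p.-1)) : nat)).
by rewrite big_nat_recl //= add0n.
Qed.

Lemma sum_d m (s : 'S_m) :
  \sum_(p < m.+1) ((p < m) && (sf s p < p)) = \sum_(0 <= i < m) (sf s i < i).
Proof.
rewrite -(big_mkord xpredT (fun p => ((p < m) && (sf s p < p)) : nat)).
rewrite big_nat_recr //= ltnn addn0.
by apply: eq_big_nat => i /andP [_ ->].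
Qed.

Lemma sum_c m (s : 'S_m) :
  \sum_(p < m.+1) ((0 < p < m) && (sf s p < sf s p.-1)) = des s.
Proof.
rewrite desE /desn.
rewrite -(big_mkord xpredT (fun p => ((0 < p < m) && (sf s p < sf s p.-1)) : nat)).
rewrite big_nat_recl //= add0n.
case: m s => [|k] s; first by rewrite !big_geq.
rewrite big_nat_recr //= ltnn /= addn0.
by apply: eq_big_nat => i /andP [_ hi] /=; rewrite ltnS hi.
Qed.

Lemma fixcE m (s : 'S_m) : (\sum_(i < m) (s i == i) = \sum_(0 <= i < m) (sf s i == i))%N.
Proof.
rewrite big_mkord; apply: eq_bigr => i _; by rewrite sfE.
Qed.

Lemma sum_edf m (s : 'S_m) :
  \sum_(0 <= i < m) (i < sf s i) + \sum_(0 <= i < m) (sf s i < i) + \sum_(0 <= i < m) (sf s i == i) = m.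
Proof.
rewrite -!big_split /= big_mkord (eq_bigr (fun _ => 1)) ?sum1_card ?card_ord // => i _.
by rewrite sfE; case: ltngtP.
Qed.

Lemma sumnB' (I : finType) (t c : I -> nat) : (forall i, c i <= t i) ->
  \sum_i (t i - c i) = \sum_i t i - \sum_i c i.
Proof.
move=> h.
have e : \sum_i (t i - c i) + \sum_i c i = \sum_i t i.
  by rewrite -big_split; apply: eq_bigr => i _; rewrite /= subnK.
by rewrite -e addnK.
Qed.

Local Open Scope ring_scope.
Local Open Scope ring_scope.

Definition fixc (n : nat) (s : 'S_n) : nat := \sum_(i < n) (s i == i).
Arguments fixc {n}.
Definition P (n f : nat) : {poly int} := \sum_(s : 'S_n | fixc s == f) 'X^(des s).
Definition Asum (n : nat) : {poly int} := \sum_(s : 'S_n) 'X^(des s).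

Lemma reindex_lift m (i j : 'I_m.+1) (F : 'S_m.+1 -> {poly int}) :
  \sum_(s : 'S_m.+1 | s i == j) F s = \sum_(s : 'S_m) F (lift_perm i j s).
Proof.
rewrite (reindex (lift_perm i j)); last first.
  pose ulsf i0 (s : 'S_m.+1) k := odflt k (unlift (s i0) (s (lift i0 k))).
  have ulsfK i0 (s : 'S_m.+1) k: lift (s i0) (ulsf i0 s k) = s (lift i0 k).
    rewrite /ulsf; have:= neq_lift i0 k.
    by rewrite -(can_eq (permK s)) => /unlift_some[] ? ? ->.
  have inj_ulsf: injective (ulsf i _).
    move=> s; apply: can_inj (ulsf (s i) s^-1%g) _ => k'.
    by rewrite {1}/ulsf ulsfK !permK liftK.
  exists (fun s => perm (inj_ulsf s)) => [s _ | s].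
    by apply/permP=> k'; rewrite permE /ulsf lift_perm_lift lift_perm_id liftK.
  move/(s _ =P _) => si0; apply/permP=> k.
  case: (unliftP i k) => [k'|] ->; rewrite ?lift_perm_id //.
  by rewrite lift_perm_lift -si0 permE ulsfK.
by apply: eq_bigl => s; rewrite lift_perm_id eqxx.
Qed.

Lemma sum_ins (I : finType) (D : I -> nat) (d : nat) :
  (forall a, D a = d \/ D a = d.+1) ->
  \sum_a 'X^(D a) = #|I|%:R *: 'X^d + (\sum_a (D a - d))%:R *: ('X^(d.+1) - 'X^d) :> {poly int}.
Proof.
move=> h.
rewrite (eq_bigr (fun a => 'X^d + (D a - d)%:R *: ('X^(d.+1) - 'X^d))); last first.
  move=> a _; case: (h a) => ->; first by rewrite subnn scale0r addr0.
  by rewrite subSnn scale1r addrC subrK.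
by rewrite big_split /= sumr_const -scaler_suml natr_sum -scaler_nat.
Qed.

Lemma Op_sum n g (I : finType) (Q : pred I) (F : I -> {poly int}) :
  Op n g (\sum_(i | Q i) F i) = \sum_(i | Q i) Op n g (F i).
Proof. exact: (big_morph (Op n g) (Op_add n g) (Op0 n g)). Qed.

Lemma Dcases (D c t d : nat) : (D + c = d + t)%N -> (c <= t <= c.+1)%N ->
  (D = d \/ D = d.+1) /\ (D - d = t - c)%N.
Proof. move=> h1 /andP [h2 h3]; split; lia. Qed.

Lemma sum_cond_const (I : finType) (Q : pred I) (K : {poly int}) :
  \sum_(i | Q i) K = K *+ (\sum_i (Q i : nat))%N.
Proof.
rewrite sumr_const -sum1_card big_mkcond /=; congr (_ *+ _).
Qed.

Lemma fixc_lift m (p : 'I_m.+1) (s : 'S_m) : fixc (lift_perm p p s) = (fixc s).+1.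
Proof.
rewrite /fixc (bigD1_ord p) //= lift_perm_id eqxx add1n; congr _.+1.
by apply: eq_bigr => k _; rewrite lift_perm_lift (inj_eq lift_inj).
Qed.

Lemma bump_ltr p x : (p < bump p x)%N = (p <= x)%N.
Proof. rewrite /bump; case: leqP => /= h; lia. Qed.
Lemma bump_ltl p y : (bump p y < p)%N = (y < p)%N.
Proof. rewrite /bump; case: leqP => /= h; lia. Qed.

Lemma inner_fix m (s : 'S_m) :
  \sum_(p : 'I_m.+1) 'X^(des (lift_perm p p s)) = Op m.+1 (fixc s) ('X^(des s)).
Proof.
set d := des s.
pose e (p : nat) := ((0 < p) && (p <= sf s p.-1))%N.
pose dd (p : nat) := ((p < m) && (sf s p < p))%N.
pose c (p : nat) := ((0 < p < m) && (sf s p < sf s p.-1))%N.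
have hD : forall p : 'I_m.+1,
    (des (lift_perm p p s) = d \/ des (lift_perm p p s) = d.+1) /\
    (des (lift_perm p p s) - d = (e p + dd p) - c p)%N.
  move=> p; apply: (@Dcases _ (c p) (e p + dd p) d).
    by rewrite des_lift bump_ltr bump_ltl -addnA.
  rewrite /e /dd /c; case: (posnP p) => [->|hp] //=.
  case: (ltnP p m) => hpm /=; rewrite ?andbF ?andbT ?addn0 //=.
    case: (ltnP (sf s p) (sf s p.-1)); case: (leqP p (sf s p.-1));
    case: (ltnP (sf s p) p) => //= *; lia.
rewrite (@sum_ins _ _ d (fun p => (hD p).1)).
rewrite (eq_bigr (fun p : 'I_m.+1 => (e p + dd p) - c p)%N); last by move=> p _; rewrite (hD p).2.
rewrite sumnB'; last first.
  move=> p; rewrite /e /dd /c; case: (posnP (p : nat)) => [->|hp] //=.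
  case: (ltnP p m) => hpm /=; rewrite ?andbF ?andbT ?addn0 //.
  case: (ltnP (sf s p) (sf s p.-1)); case: (leqP p (sf s p.-1));
    case: (ltnP (sf s p) p) => //= *; lia.
rewrite big_split /= sum_e sum_d sum_c -/d.
have hfix := sum_edf _ s; rewrite -(fixcE _ s) -/(fixc s) in hfix.
have hdE : (d <= \sum_(0 <= i < m) (i < sf s i) + \sum_(0 <= i < m) (sf s i < i))%N.
  rewrite /d -(sum_c _ s) -(sum_e _ s) -(sum_d _ s) -big_split /=; apply: leq_sum => p _.
  rewrite /e /dd /c; case: (posnP (p : nat)) => [->|hp] //=.
  case: (ltnP p m) => hpm /=; rewrite ?andbF ?andbT ?addn0 //.
  case: (ltnP (sf s p) (sf s p.-1)); case: (leqP p (sf s p.-1));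
    case: (ltnP (sf s p) p) => //= *; lia.
set E1 := (\sum_(0 <= i < m) _)%N in hfix *.
set E2 := (\sum_(0 <= i < m) _)%N in hfix *.
have hm : (m%:R : int) = E1%:R + E2%:R + (fixc s)%:R by rewrite -!natrD hfix.
rewrite OpX card_ord natrB // /= -[m.+1]addn1 -[d.+1]addn1 !natrD hm.
rewrite -!mul_polyC !(polyCB, polyCD, polyC_natr, natrD, exprS) /=.
ring.
Qed.

Lemma sum_ltm m : (\sum_(a < m.+1) (a < m) = m)%N.
Proof.
rewrite big_ord_recr /= ltnn addn0 (eq_bigr (fun _ => 1%N)) ?sum1_card ?card_ord //.
by move=> i _; rewrite ltn_ord.
Qed.

Lemma inner_max m (s : 'S_m) :
  \sum_(a : 'I_m.+1) 'X^(des (lift_perm a ord_max s)) = T m.+1 ('X^(des s)).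
Proof.
set d := des s.
pose c (p : nat) := ((0 < p < m) && (sf s p < sf s p.-1))%N.
have hD : forall p : 'I_m.+1,
    (des (lift_perm p ord_max s) = d \/ des (lift_perm p ord_max s) = d.+1) /\
    (des (lift_perm p ord_max s) - d = (p < m) - c p)%N.
  move=> p; apply: (@Dcases _ (c p) (p < m)%N d).
    rewrite des_lift /=.
    case: (posnP (p : nat)) => [->|hp] /=.
      case: (ltnP 0 m) => hm; last by rewrite /= !addn0.
      have hx := sf_lt _ s _ hm; by rewrite /= /bump (leqNgt m) hx /= hx addn0.
    have h1 : (sf s p.-1 < m)%N by apply: sf_lt; have := ltn_ord p; lia.
    rewrite /bump (leqNgt m (sf s p.-1)) h1 /= add0n ltnNge (ltnW h1) /= addn0.
    case: (ltnP p m) => hpm /=; last by rewrite addn0.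
    by have hy := sf_lt _ s _ hpm; rewrite (leqNgt m) hy /= hy.
  rewrite /c; case: (posnP (p : nat)) => [->|hp] /=; first by case: (0 < m)%N.
  by case: (p < m)%N; case: (_ < _)%N.
rewrite (@sum_ins _ _ d (fun p => (hD p).1)).
rewrite (eq_bigr (fun p : 'I_m.+1 => (p < m) - c p)%N); last by move=> p _; rewrite (hD p).2.
have hc : forall p : 'I_m.+1, (c p <= (p < m))%N.
  move=> p; rewrite /c; case: (posnP (p : nat)) => [->|hp] /=; first by case: (0 < m)%N.
  by case: (p < m)%N; case: (_ < _)%N.
rewrite sumnB' // sum_ltm sum_c -/d.
have hdm : (d <= m)%N.
  have hle : (\sum_(p < m.+1) c p <= \sum_(p < m.+1) (p < m))%N by apply: leq_sum => p _; exact: hc p.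
  by rewrite sum_ltm (sum_c _ s) in hle.
rewrite TX card_ord natrB // /= -[m.+1]addn1 -[d.+1]addn1 !natrD.
rewrite -!mul_polyC !(polyCB, polyCD, polyC_natr, natrD, exprS) /=.
ring.
Qed.

Lemma FA m f : (f.+1)%:R *: P m.+1 f.+1 = Op m.+1 f (P m f).
Proof.
rewrite /P scaler_sumr Op_sum.
transitivity (\sum_(p : 'I_m.+1) \sum_(π : 'S_m.+1 | π p == p)
                 (if fixc π == f.+1 then 'X^(des π) else 0 : {poly int})).
  symmetry; rewrite (exchange_big_dep xpredT) //= [RHS]big_mkcond /=.
  apply: eq_bigr => π _; rewrite sum_cond_const /= -/(fixc π).
  case: eqP => [e|_]; last by rewrite mul0rn.
  by rewrite -e scaler_nat.
rewrite (eq_bigr (fun p : 'I_m.+1 => \sum_(σ : 'S_m | fixc σ == f) 'X^(des (lift_perm p p σ)))); last first.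
  move=> p _; rewrite reindex_lift [RHS]big_mkcond /=.
  by apply: eq_bigr => σ _; rewrite fixc_lift eqSS.
rewrite exchange_big /=; apply: eq_bigr => σ /eqP <-.
exact: inner_fix.
Qed.

Lemma FB m : Asum m.+1 = T m.+1 (Asum m).
Proof.
rewrite /Asum T_sum.
transitivity (\sum_(a : 'I_m.+1) \sum_(π : 'S_m.+1 | π a == ord_max) ('X^(des π) : {poly int})).
  rewrite (exchange_big_dep xpredT) //=; apply: eq_bigr => π _.
  rewrite (eq_bigl (fun a => a == (π^-1)%g ord_max)); first by rewrite big_pred1_eq.
  by move=> a; rewrite /= (can2_eq (permK π) (permKV π)).
rewrite (eq_bigr (fun a : 'I_m.+1 => \sum_(σ : 'S_m) 'X^(des (lift_perm a ord_max σ)))); last first.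
  by move=> a _; rewrite reindex_lift.
rewrite exchange_big /=; apply: eq_bigr => σ _.
exact: inner_max.
Qed.

Lemma fixc_le n (s : 'S_n) : (fixc s <= n)%N.
Proof.
rewrite /fixc; apply: (@leq_trans (\sum_(i < n) 1)%N); first by apply: leq_sum => i _; case: (_ == _).
by rewrite sum1_card card_ord.
Qed.

Lemma FP n N : (n < N)%N -> \sum_(f < N) P n f = Asum n.
Proof.
move=> hN; rewrite /P /Asum (exchange_big_dep xpredT) //=.
apply: eq_bigr => s _.
have hf : (fixc s < N)%N by apply: (leq_ltn_trans (fixc_le _ s) hN).
rewrite (eq_bigl (fun f : 'I_N => f == Ordinal hf)); first by rewrite big_pred1_eq.
by move=> f; rewrite /= eq_sym.
Qed.

Lemma P0 f : P 0 f = if f == 0%N then 1 else 0.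
Proof.
have hd : forall s : 'S_0, des s = 0%N.
  by move=> s; apply/eqP; rewrite cards_eq0; apply/eqP/setP => [[[i hi] j]].
have hf : forall s : 'S_0, fixc s = 0%N by move=> s; rewrite /fixc big_ord0.
rewrite /P (eq_bigl (fun _ => f == 0%N)); last by move=> s; rewrite hf eq_sym.
case: eqP => _; last by rewrite big_pred0.
rewrite (eq_bigr (fun _ => 1)); last by move=> s _; rewrite hd.
by rewrite sumr_const card_Sn.
Qed.

Lemma Ypos m : (forall f, P m.+1 f = T m.+1 (P m f) + c m.+1 f) ->
  forall g, P m.+2 g.+1 = T m.+2 (P m.+1 g.+1) + c m.+2 g.+1.
Proof.
move=> IH g; apply: (@scaler_injS g).
rewrite FA IH Op_add A3 [in RHS]scalerDr -T_scale FA.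
by congr (_ + _); rewrite /Op T_add T_scale comm_T.
Qed.

Lemma Y0 m : (forall g, P m.+1 g.+1 = T m.+1 (P m g.+1) + c m.+1 g.+1) ->
  P m.+1 0 = T m.+1 (P m 0) + c m.+1 0.
Proof.
move=> IH.
have h1 := FP _ _ (ltnSn m.+1); have h2 := FP m m.+2 (ltnW (ltnSn m.+1)).
rewrite big_ord_recl in h1; rewrite big_ord_recl in h2.
have h3 := A1 m; rewrite big_ord_recl in h3.
have e : P m.+1 0 = Asum m.+1 - \sum_(i < m.+1) P m.+1 (lift ord0 i).
  by rewrite -h1 addrK.
rewrite e FB -h2 T_add.
have ht : T m.+1 (\sum_(i < m.+1) P m (lift ord0 i)) =
   \sum_(i < m.+1) T m.+1 (P m (lift ord0 i)) := T_sum _ _ _ _.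
have hs : \sum_(i < m.+1) P m.+1 (lift ord0 i) =
   \sum_(i < m.+1) T m.+1 (P m (lift ord0 i)) + \sum_(i < m.+1) c m.+1 (lift ord0 i).
  by rewrite -big_split; apply: eq_bigr => i _; exact: IH.
rewrite ht hs.
have -> : c m.+1 0 = - \sum_(i < m.+1) c m.+1 (lift ord0 i).
  by apply/eqP; rewrite -addr_eq0 h3.
ring.
Qed.

Lemma Y1 g : P 1 g.+1 = T 1 (P 0 g.+1) + c 1 g.+1.
Proof.
apply: (@scaler_injS g); rewrite FA !P0 /=.
case: g => [|g] /=.
  have d1 : (1 : {poly int})^`() = 0 by rewrite -polyC1 derivC.
  rewrite T0 add0r scale1r /Op /T /c /b /= d1 scale0r addr0 mulr0 addr0 mulr1.
  by rewrite scale0r addr0 (bin_small (ltnSn 0)) mulr0 scale0r subr0 /= bin0 mulr1 scale1r expr0.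
rewrite Op0 T0 add0r /c /b /= !bin_small // !mulr0 !scale0r subr0 scaler0 //.
Qed.

Lemma Yall n : forall f, P n.+1 f = T n.+1 (P n f) + c n.+1 f.
Proof.
elim: n => [|n IH] f.
  case: f => [|g]; last exact: Y1.
  by apply: Y0 => g; apply: Y1.
case: f => [|g]; last exact: Ypos.
by apply: Y0 => g; apply: Ypos.
Qed.

Lemma DP n : Dpoly n = P n 0.
Proof.
rewrite /Dpoly /P; apply: eq_bigl => s.
rewrite /derangement /fixc sum_nat_eq0; apply: eq_forallb => i.
by case: (s i == i).
Qed.

Theorem lemma4p1 (n : nat) : (3 <= n)%N ->
  Dpoly n = (-1) ^+ n *: 'X^(n.-1)
            + (1 + (n.-1)%:R *: 'X) * Dpoly n.-1
            + 'X * (1 - 'X) * (Dpoly n.-1)^`().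
Proof.
case: n => [//|m] _; rewrite /= !DP Yall A2 /T; ring.
Qed.
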